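(* Let $G$ be a $\gamma_t$-critical graph of order $n$ with $\gamma_t(G)=n-\Delta(G)$ and $\delta(G)\ge 2$. Then $G$ is connected.
   Context: All graphs are finite and simple; $\Delta(G)$, $\delta(G)$ are maximum and minimum degree. A set $S\subseteq V(G)$ is a total dominating set if every vertex of $G$ is adjacent to some vertex of $S$; $\gamma_t(G)$ is the minimum size of such a set. A leaf is a vertex of degree one. A graph $G$ with no isolated vertex is $\gamma_t$-critical if for every vertex $v$ not adjacent to a leaf, $\gamma_t(G-v)<\gamma_t(G)$. *)

(* Defs.v *)
(* Subgraphs induced on a vertex set
   V : {set T} are used to talk about G - v (= induced on [set: T] :\ v). *)
From mathcomp Require Import all_boot all_order.
Set Implicit Arguments. Unset Strict Implicit. Unset Printing Implicit Defensive.

Definition simple_graph (T : finType) (e : rel T) : Prop :=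
  symmetric e /\ irreflexive e.

Definition nbhd (T : finType) (e : rel T) (V : {set T}) (x : T) : {set T} :=
  [set y in V | e x y].
Definition deg (T : finType) (e : rel T) (V : {set T}) (x : T) : nat :=
  #|nbhd e V x|.

(* max / min degree of the graph induced on V (V assumed nonempty) *)
Definition maxdeg (T : finType) (e : rel T) (V : {set T}) : nat :=
  \max_(x in V) deg e V x.
Definition mindeg (T : finType) (e : rel T) (V : {set T}) : nat :=
  \big[minn/#|T|]_(x in V) deg e V x.

Definition is_tds (T : finType) (e : rel T) (V S : {set T}) : bool :=
  (S \subset V) && [forall x in V, exists y in S, e x y].

(* total domination number; if no TDS exists (isolated vertex) the value
   is #|T|.+1, strictly larger than any possible size of a TDS *)
Definition gamma_t (T : finType) (e : rel T) (V : {set T}) : nat :=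
  \big[minn/#|T|.+1]_(S : {set T} | is_tds e V S) #|S|.

Definition is_leaf (T : finType) (e : rel T) (x : T) : bool :=
  deg e [set: T] x == 1.

Definition no_isolated (T : finType) (e : rel T) : Prop :=
  forall x : T, 0 < deg e [set: T] x.

Definition gt_critical (T : finType) (e : rel T) : Prop :=
  no_isolated e /\
  forall v : T, ~~ [exists u, e v u && is_leaf e u] ->
    gamma_t e ([set: T] :\ v) < gamma_t e [set: T].

Definition connected_graph (T : finType) (e : rel T) : Prop :=
  forall x y : T, connect e x y.

(* Main.v *)
Require Import Defs.
From mathcomp Require Import all_boot all_order.
From Stdlib Require Import Lia.

Lemma bigmin_le (I : finType) (P : pred I) (F : I -> nat) d z :
  P z -> \big[minn/d]_(i | P i) F i <= F z.
Proof.
move=> Pz; have : z \in index_enum I by rewrite mem_index_enum.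
elim: (index_enum I) => [|a s IH] //.
rewrite inE big_cons; case/orP => [/eqP<-|zs].
  by rewrite Pz geq_minl.
case: (P a); last exact: IH.
by rewrite (leq_trans (geq_minr _ _)) //; exact: IH.
Qed.

Lemma bigmin_cases (I : finType) (P : pred I) (F : I -> nat) d :
  (\big[minn/d]_(i | P i) F i = d) \/
  exists2 i, P i & \big[minn/d]_(i | P i) F i = F i.
Proof.
apply: (big_ind (fun k => k = d \/ exists2 i, P i & k = F i)).
- by left.
- by move=> x y Hx Hy; case: (leqP x y).
- by move=> i Pi; right; exists i.
Qed.

Arguments bigmin_le {I} P F d z.
Arguments bigmin_cases {I} P F d.

Theorem mainTheorem3 (T : finType) (e : rel T) :
  simple_graph e ->
  gt_critical e ->
  gamma_t e [set: T] = #|T| - maxdeg e [set: T] ->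
  2 <= mindeg e [set: T] ->
  connected_graph e.
Proof.
move=> [sym irr] [noiso crit] Hg Hmin x y.
have deg2 : forall z, 2 <= deg e [set: T] z.
  move=> z; apply: (leq_trans Hmin); rewrite /mindeg.
  by apply: bigmin_le; rewrite in_setT.
have csym := sym_connect_sym sym.
have [v _ Hv] : {v | v \in [set: T] & maxdeg e [set: T] = deg e [set: T] v}.
  apply: eq_bigmax_cond; apply/card_gt0P; by exists x; rewrite in_setT.
set N := nbhd e [set: T] v.
have vN : v \notin N by rewrite /N /nbhd inE irr andbF.
have degN : deg e [set: T] v = #|N| by [].
have tdsT : is_tds e [set: T] [set: T].
  apply/andP; split; first exact: subxx.
  apply/forall_inP => z _.
  have /card_gt0P [w] : 0 < deg e [set: T] z by exact: noiso.
  by rewrite inE => /andP [_ ezw]; apply/exists_inP; exists w; rewrite ?in_setT.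
have gle : gamma_t e [set: T] <= #|T|.
  by rewrite -cardsT; apply: bigmin_le.
have nleaf : ~~ [exists u, e v u && is_leaf e u].
  apply/existsPn => u; apply/negP => /andP [_ /eqP H].
  by have := deg2 u; rewrite H.
have Hc := crit v nleaf.
have [S' tdsS' ltS'] : exists2 S', is_tds e ([set: T] :\ v) S' &
    #|S'| < gamma_t e [set: T].
  case: (bigmin_cases (fun S => is_tds e ([set: T] :\ v) S) (fun S => #|S|) #|T|.+1).
    move=> H; move: Hc; rewrite /gamma_t in H *; rewrite H => Hc.
    exfalso; move/ltP: (leq_trans Hc gle); lia.
  move=> [S PS HS]; exists S; first exact: PS.
  move: Hc; rewrite /gamma_t HS; exact.
move/andP: tdsS' => [sS' /forall_inP domS'].
have S'N : forall w, w \in S' -> ~~ e v w.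
  move=> w wS; apply/negP => evw.
  have : is_tds e [set: T] S'.
    apply/andP; split; first exact: subsetT.
    apply/forall_inP => z _; case: (eqVneq z v) => [->|zv].
      by apply/exists_inP; exists w.
    by apply: domS'; rewrite !inE zv.
  move=> /(bigmin_le (is_tds e [set: T]) (fun S : {set T} => #|S|) (#|T|.+1)) H.
  by move: (leq_ltn_trans H ltS'); rewrite ltnn.
have S'v : forall w, w \in S' -> w != v.
  by move=> w /(subsetP sS'); rewrite !inE andbT.
suff allc : forall z, connect e v z.
  apply: connect_trans (allc y); by rewrite csym.
move=> x0; apply/negPn/negP => /negP nc.
have [u] : exists u, u \in N.
  apply/card_gt0P; rewrite -degN; exact: leq_trans (deg2 v).
rewrite /N /nbhd inE => /andP [_ evu].
set W := ~: (v |: N).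
have inW : forall w, (w \in W) = (w != v) && ~~ e v w.
  by move=> w; rewrite /W /N /nbhd !inE negb_or.
have x0W : x0 \in W.
  rewrite inW; apply/andP; split.
    by apply/eqP => h; apply: nc; rewrite h connect0.
  by apply/negP => h; apply: nc; exact: connect1.
set S := (W :\ x0) :|: [set u].
have tdsS : is_tds e [set: T] S.
  apply/andP; split; first exact: subsetT.
  apply/forall_inP => z _.
  case: (eqVneq z v) => [->|zv].
    by apply/exists_inP; exists u; rewrite // !inE eqxx orbT.
  case: (boolP (connect e v z)) => cz.
    have /exists_inP [w wS' ezw] : [exists y in S', e z y] by apply: domS'; rewrite !inE zv.
    apply/exists_inP; exists w => //.
    rewrite in_setU in_setD1 inW; apply/orP; left; apply/andP; split.
      apply/eqP => h; apply: nc; rewrite -h.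
      exact: connect_trans cz (connect1 ezw).
    by rewrite S'v // S'N.
  move/negP: cz => cz.
  have : 0 < #|nbhd e [set: T] z :\ x0|.
    have := deg2 z; rewrite /deg (cardsD1 x0).
    case: (x0 \in _) => /=; rewrite ?add0n ?add1n ?ltnS //; exact: ltnW.
  case/card_gt0P => w; rewrite !inE => /andP [wx /andP [_ ezw]].
  apply/exists_inP; exists w => //.
  rewrite in_setU in_setD1 inW wx /=; apply/orP; left; apply/andP; split.
    apply/eqP => h; apply: cz; apply: connect1; by rewrite sym -h.
  apply/negP => evw; apply: cz.
  apply: connect_trans (connect1 evw) (connect1 _); by rewrite sym.
have := bigmin_le (is_tds e [set: T]) (fun S : {set T} => #|S|) (#|T|.+1) _ tdsS.
rewrite -/(gamma_t e [set: T] ) => H.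
have cS : #|S| <= #|W|.
  apply: (leq_trans (leq_card_setU _ _)); rewrite cards1 addn1.
  by rewrite [#|W|](cardsD1 x0) x0W add1n.
have cW : #|W| + (#|N|).+1 = #|T|.
  by rewrite -[#|T|](cardsC (v |: N)) cardsU1 vN add1n addnC.
move: H; rewrite Hg Hv degN => H.
have := leq_trans H cS.
move/leP: H => _.
move=> H2; move/leP: H2; rewrite -cW; move=> H2.
have : #|W| + #|N|.+1 - #|N| = #|W|.+1.
  by rewrite addnS subSn ?leq_addl // addnK.
move=> E; rewrite E in H2; lia.
Qed.
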